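(* For every pair $1\le i<j<k$, the vector $\vec \alpha^{\{i,j\}}$ is an element of $\Lambda$.
   Context: Let $g\ge 2$, $k\ge 3$ be integers, $\mathbb Z_g$ the integers mod $g$, and $d=\binom{k}{2}(g-1)$. Index the coordinates of $\mathbb R^d$ by pairs $(\{i,j\},a)$ with $1\le i<j\le k$ and $a\in\mathbb Z_g\setminus\{0\}$. Define $Z:(\mathbb Z_g)^k\to\mathbb R^d$ by $[Z(\vec x)]_{\{i,j\},a}=1-1/g$ if $x_i-x_j=a$ and $-1/g$ otherwise. Define $\Phi(\vec\theta)=\sum_{\vec x\in(\mathbb Z_g)^k} g^{-k}e^{i\vec\theta\cdot Z(\vec x)}$ for $\vec\theta\in\mathbb R^d$, and $\Lambda=\{\vec\theta\in\mathbb R^d: |\Phi(\vec\theta)|=1\}$. Let $\mathbbm{1}_{\{i,j\},a}$ be the standard basis vector of $\mathbb R^d$ with a $1$ in coordinate $(\{i,j\},a)$. For $1\le i<j<k$ (strict inequality $j<k$) define \[ \vec \alpha^{\{i,j\}} = \sum_{n=1}^{g-1} \frac{2\pi n}{g} \mathbbm{1}_{\{i,j\},n}+ \sum_{n=1}^{g-1} \frac{2 \pi(g-n)}{g} \mathbbm{1}_{\{i,k\},n} + \sum_{n=1}^{g-1} \frac{2 \pi n}{g} \mathbbm{1}_{\{j,k\},n},\] where $n$ is an integer in $[1,g-1]$ except in the subscripts, where it denotes the corresponding element of $\mathbb Z_g$. *)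

(* Defs.v *)
From HB Require Import structures.
From mathcomp Require Import all_boot all_order all_algebra.
From mathcomp Require Import all_classical all_reals.
From mathcomp Require Import trigo.
From mathcomp Require Import complex.

Set Implicit Arguments.
Unset Strict Implicit.
Unset Printing Implicit Defensive.

Import Order.TTheory GRing.Theory Num.Theory.
Local Open Scope ring_scope.

Definition pairIdx (k : nat) := {p : 'I_k * 'I_k | (p.1 < p.2)%N}.

Definition nzZg (g : nat) := {a : 'Z_g | a != 0}.

(* Coordinates of R^d, d = binom(k,2)(g-1): pairs ({i,j}, a). *)
Definition coord (g k : nat) := (pairIdx k * nzZg g)%type.

Section Defs.
Variable R : realType.

Definition Zvec (g k : nat) (x : {ffun 'I_k -> 'Z_g}) (c : coord g k) : R :=
  let i := (sval c.1).1 in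
  let j := (sval c.1).2 in
  if x i - x j == sval c.2 then 1 - (g%:R)^-1 else - (g%:R)^-1.

Definition expi (t : R) : R[i] := (cos t +i* sin t)%C.

Definition dotp (g k : nat) (theta u : coord g k -> R) : R :=
  \sum_(c : coord g k) theta c * u c.

Definition Phi (g k : nat) (theta : coord g k -> R) : R[i] :=
  \sum_(x : {ffun 'I_k -> 'Z_g}) ((g%:R ^- k : R)%:C)%C * expi (dotp theta (Zvec x)).

Definition Lambda (g k : nat) : set (coord g k -> R) :=
  [set theta | `|Phi theta| = 1].

(* alpha^{i,j} for 0-based i < j < k-1; the paper's index k is k.-1 here. *)
Definition alpha (g k : nat) (i j : nat) (c : coord g k) : R :=
  let p := val (sval c.1).1 in
  let q := val (sval c.1).2 in
  let n := val (sval c.2) in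
  if (p == i) && (q == j) then 2 * pi * n%:R / g%:R
  else if (p == i) && (q == k.-1) then 2 * pi * (g - n)%:R / g%:R
  else if (p == j) && (q == k.-1) then 2 * pi * n%:R / g%:R
  else 0.

End Defs.

(* Main.v *)
Require Import Defs.
From HB Require Import structures.
From mathcomp Require Import all_boot all_order all_algebra.
From mathcomp Require Import all_classical all_reals.
From mathcomp Require Import trigo.
From mathcomp Require Import complex.
From mathcomp Require Import ring.
Set Implicit Arguments. Unset Strict Implicit.
Local Open Scope classical_set_scope.
Import Order.TTheory GRing.Theory Num.Theory.
Local Open Scope ring_scope.

Section S.
Variables (R : realType) (g k : nat).
Hypothesis hg : (2 <= g)%N.

Definition mkP (a b : nat) (ha : (a < k)%N) (hb : (b < k)%N) (hab : (a < b)%N) : pairIdx k :=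
  exist _ (Ordinal ha, Ordinal hb) hab.

Lemma eq_mkP (a b : nat) (ha : (a < k)%N) (hb : (b < k)%N) (hab : (a < b)%N) (p : pairIdx k) :
  (p == mkP ha hb hab) = (val (sval p).1 == a) && (val (sval p).2 == b).
Proof. by case: p => [[p1 p2] h]. Qed.

Lemma sum_ind (F : 'Z_g -> R) (d : 'Z_g) :
  \sum_(a : nzZg g) F (sval a) * (if d == sval a then 1 else 0) = if d == 0 then 0 else F d.
Proof.
case: eqP => [->|/eqP dn0].
  by apply: big1 => [[a ha]] _ /=; rewrite eq_sym (negbTE ha) mulr0.
rewrite (bigD1 (exist _ d dn0 : nzZg g)) //= eqxx mulr1 big1 ?addr0 // => [[a ha]] /= hne.
case: eqP => [da|]; last by rewrite mulr0.
by exfalso; move/negP: hne; apply; apply/eqP/val_inj; rewrite /= da.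
Qed.

Lemma valZD (u w : 'Z_g) : val (u + w) = ((val u + val w) %% g)%N.
Proof. rewrite /=; congr (_ %% _)%N; exact: Zp_cast. Qed.

Lemma cardZg : #|'Z_g| = g.
Proof. by rewrite card_ord Zp_cast. Qed.

Definition x0 : {ffun 'I_k -> 'Z_g} := [ffun=> 0].
Definition ind (x : {ffun 'I_k -> 'Z_g}) (c : Defs.coord g k) : R :=
  if x (sval c.1).1 - x (sval c.1).2 == sval c.2 then 1 else 0.

Lemma Zdiff x c : Zvec R x c - Zvec R x0 c = ind x c.
Proof.
rewrite /Zvec /ind /x0 !ffunE subr0.
have -> : (0 == sval c.2) = false by rewrite eq_sym; exact: (negbTE (svalP c.2)).
by case: ifP => _; rewrite ?opprK ?subrK // addrC subrr.
Qed.

Lemma dotp_diff theta x : dotp theta (Zvec R x) = dotp theta (Zvec R x0) + \sum_c theta c * ind x c.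
Proof.
rewrite /dotp -big_split /=; apply: eq_bigr => c _.
by rewrite -mulrDr -Zdiff addrC subrK.
Qed.

Lemma cos_per (t : R) m : cos (t + (pi *+ 2) *+ m) = cos t.
Proof. by elim: m => [|m IH]; rewrite ?mulr0n ?addr0 // mulrSr addrA cosD2pi. Qed.
Lemma sin_per (t : R) m : sin (t + (pi *+ 2) *+ m) = sin t.
Proof. by elim: m => [|m IH]; rewrite ?mulr0n ?addr0 // mulrSr addrA sinD2pi. Qed.

Lemma norm_expi (t : R) : `|expi t| = 1.
Proof.
rewrite normc_def /expi /= cos2Dsin2 sqrtr1 //.
Qed.

Lemma arith (a b c q : nat) (hc : (c < g)%N)
  (E : a%:R = q%:R * g%:R + c%:R - b%:R :> R) :
  2 * pi * a%:R / g%:R + (if c == 0%N then (0:R) else 2 * pi * (g - c)%:R / g%:R)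
  + 2 * pi * b%:R / g%:R = pi * (2 * (q + (c != 0%N)))%N%:R.
Proof.
have g0 : g%:R != 0 :> R by rewrite pnatr_eq0; case: g hg.
rewrite E natrM natrD.
case: (eqVneq c 0%N) => [->|cn0] /=.
  by rewrite addr0; field.
by rewrite natrB ?(ltnW hc) //; field.
Qed.

Variables (i j : nat).
Hypotheses (hk : (3 <= k)%N) (hij : (i < j)%N) (hjk : (j < k.-1)%N).

Lemma sumS x : exists m : nat, \sum_c alpha R i j c * ind x c = (pi *+ 2) *+ m.
Proof.
have hK : (k.-1 < k)%N by case: k hk.
have hj : (j < k)%N := ltn_trans hjk hK.
have hi : (i < k)%N := ltn_trans hij hj.
have hiK : (i < k.-1)%N := ltn_trans hij hjk.
set Pij := mkP hi hj hij; set Pik := mkP hi hK hiK; set Pjk := mkP hj hK hjk.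
pose F p := \sum_(a : nzZg g) alpha R i j (p, a) * ind x (p, a).
have -> : \sum_c alpha R i j c * ind x c = \sum_p F p by rewrite pair_big.
have dec : forall p, F p = (if p == Pij then F Pij else 0) + (if p == Pik then F Pik else 0)
     + (if p == Pjk then F Pjk else 0).
  move=> p.
  have e1 := eq_mkP hi hj hij p; have e2 := eq_mkP hi hK hiK p; have e3 := eq_mkP hj hK hjk p.
  rewrite -/Pij in e1; rewrite -/Pik in e2; rewrite -/Pjk in e3.
  have eij := ltn_eqF hij; have ejK := ltn_eqF hjk; have eiK := ltn_eqF hiK.
  case: (eqVneq p Pij) => [->|n1].
    by rewrite !eq_mkP /= !eqxx ejK eij /= !addr0.
  case: (eqVneq p Pik) => [->|n2].
    by rewrite !eq_mkP /= !eqxx eij /= addr0 add0r.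
  case: (eqVneq p Pjk) => [->|n3].
    by rewrite ?eqxx !add0r.
  rewrite !addr0 /F; apply: big1 => a _.
  by rewrite /alpha /= -e1 -e2 -e3 (negbTE n1) (negbTE n2) (negbTE n3) mul0r.
rewrite (eq_bigr _ (fun p _ => dec p)) !big_split /= -!big_mkcond !big_pred1_eq.
set u := x (Ordinal hi) - x (Ordinal hj).
set w := x (Ordinal hj) - x (Ordinal hK).
set v := x (Ordinal hi) - x (Ordinal hK).
have ev : v = u + w by rewrite /v /u /w addrA subrK.
have -> : F Pij = 2 * pi * (val u)%:R / g%:R.
  rewrite /F (eq_bigr (fun a => (fun b : 'Z_g => 2 * pi * (val b)%:R / g%:R) (sval a) * (if u == sval a then 1 else 0))); last first.
    by move=> a _; rewrite /alpha /ind /= !eqxx.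
  rewrite (sum_ind (fun b : 'Z_g => 2 * pi * (val b)%:R / g%:R) u); case: eqP => [->|] //=; rewrite mulr0 mul0r //.
have -> : F Pjk = 2 * pi * (val w)%:R / g%:R.
  rewrite /F (eq_bigr (fun a => (fun b : 'Z_g => 2 * pi * (val b)%:R / g%:R) (sval a) * (if w == sval a then 1 else 0))); last first.
    by move=> a _; rewrite /alpha /ind /= !eqxx (eq_sym j) (ltn_eqF hij).
  by rewrite (sum_ind (fun b : 'Z_g => 2 * pi * (val b)%:R / g%:R) w); case: eqP => [->|] //=; rewrite mulr0 mul0r //.
have -> : F Pik = if v == 0 then 0 else 2 * pi * (g - val v)%:R / g%:R.
  rewrite /F (eq_bigr (fun a => (fun b : 'Z_g => 2 * pi * (g - val b)%:R / g%:R) (sval a) * (if v == sval a then 1 else 0))); last first.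
    by move=> a _; rewrite /alpha /ind /= !eqxx (eq_sym _ j) (ltn_eqF hjk).
  by rewrite (sum_ind (fun b : 'Z_g => 2 * pi * (g - val b)%:R / g%:R) v).
have hv : val v = ((val u + val w) %% g)%N by rewrite ev valZD.
have hvg : (val v < g)%N by rewrite hv ltn_mod; case: g hg.
exists ((val u + val w) %/ g + (v != 0%R))%N.
have E : (val u)%:R = ((val u + val w) %/ g)%:R * g%:R + (val v)%:R - (val w)%:R :> R.
  by rewrite -natrM -natrD hv -divn_eq natrD addrK.
have g0 : g%:R != 0 :> R by rewrite pnatr_eq0; case: g hg.
have hv0 : (v == 0) = (val v == 0)%N by [].
rewrite -mulrnA -[pi *+ _]mulr_natr hv0.
exact: arith.
Qed.

End S.

Theorem proposition2p8 (R : realType) (g k : nat) (hg : (2 <= g)%N) (hk : (3 <= k)%N)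
  (i j : nat) (hij : (i < j)%N) (hjk : (j < k.-1)%N) :
  (@alpha R g k i j) \in (@Lambda R g k).
Proof.
apply: mem_set; rewrite /Lambda /= /Phi.
set C := dotp (alpha R i j) (Zvec R (@x0 g k)).
have -> : \sum_(x : {ffun 'I_k -> 'Z_g}) ((g%:R ^- k : R)%:C)%C * expi (dotp (alpha R i j) (Zvec R x))
   = \sum_(x : {ffun 'I_k -> 'Z_g}) ((g%:R ^- k : R)%:C)%C * expi C.
  apply: eq_bigr => x _; rewrite dotp_diff -/C.
  have [m ->] := sumS R hg hk hij hjk x.
  by rewrite /expi cos_per sin_per.
rewrite sumr_const card_ffun !card_ord (Zp_cast hg) -[X in `|X|]mulr_natl mulrA.
have -> : ((g ^ k)%:R * ((g%:R ^- k : R)%:C)%C : R[i]) = 1.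
  have g0 : g%:R != 0 :> R by rewrite pnatr_eq0 -lt0n (ltnW hg).
  by rewrite -(rmorph_nat (real_complex R)) -rmorphM natrX mulfV ?expf_neq0 // rmorph1.
by rewrite mul1r norm_expi.
Qed.
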